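(* Consider the discrete setting described in the context, with $N$ odd, and let $F^n$ be the solution of the linearized scheme with $\sum_{i,j}\Delta x\Delta v(f^0_{ij}-g^0_{ij})=0$. Let $\Delta t_{\max}>0$. There is $\delta_2>0$ such that for all $\Delta t\le\Delta t_{\max}$ and all $\delta\in(0,\delta_2]$, there exists $K_\delta>0$ such that for all $n\ge1$ $$H^\Delta_\delta[F^{n+1}]-H^\Delta_\delta[F^n]\le-\Delta t\,K_\delta\,\|F^{n+1}\|_\Delta^2.$$
   Context: Space mesh: $N$ uniform cells of length $\Delta x$, $i\in\mathcal I=\mathbb Z/N\mathbb Z$ (periodic). Velocity mesh: $\Delta v=v^*/L$, $j\in\mathcal J=\{-L+1,\dots,L\}$, $v_j=(j-\tfrac12)\Delta v$. Time step $\Delta t>0$; $\lambda=\Delta x/(2\Delta t)$ a fixed positive constant. Fixed $\rho_\infty^*>0$. For $k=1,2$: $\chi_{k,j}>0$, $\chi_{k,j}=\chi_{k,1-j}$, $\sum_j\Delta v\chi_{k,j}=1$, $0<\underline D_k\le\sum_j\Delta v\,v_j^2\chi_{k,j}\le\overline D_k$, $\sum_j\Delta v\,v_j^4\chi_{k,j}\le\overline Q_k$. $(D^c_xu)_i=\frac{u_{i+1}-u_{i-1}}{2\Delta x}$; $\langle u,w\rangle_2=\sum_i\Delta x\,u_iw_i$. Densities $\rho_{f,i}=\sum_j\Delta vf_{ij}$, $\rho_{g,i}=\sum_j\Delta vg_{ij}$; $h=f-g$, $u^n_{h,i}=\sum_j\Delta vh^n_{ij}$, $J^n_{h,i}=\sum_j\Delta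 v\,v_jh^n_{ij}$. Linearized scheme ($n\ge0$): $\frac{f^{n+1}_{ij}-f^n_{ij}}{\Delta t}+\frac{1}{\Delta x\Delta v}(\mathcal F^{n+1}_{i+\frac12,j}-\mathcal F^{n+1}_{i-\frac12,j})=-\rho_\infty^*\chi_{1,j}\rho^{n+1}_{g,i}-(\rho_\infty^* )^{-1}f^{n+1}_{ij}$, $\frac{g^{n+1}_{ij}-g^n_{ij}}{\Delta t}+\frac{1}{\Delta x\Delta v}(\mathcal G^{n+1}_{i+\frac12,j}-\mathcal G^{n+1}_{i-\frac12,j})=-(\rho_\infty^* )^{-1}\chi_{2,j}\rho^{n+1}_{f,i}-\rho_\infty^*g^{n+1}_{ij}$, with $\mathcal F^{n+1}_{i+\frac12,j}=\Delta v\frac{v_j}{2}(f^{n+1}_{i+1,j}+f^{n+1}_{ij})-\Delta v\lambda(f^{n+1}_{i+1,j}-f^{n+1}_{ij})$, $\mathcal G$ likewise with $g$. Norm $\|F\|_\Delta^2=\sum_{i,j}\Delta x\Delta v\big(\frac{f_{ij}^2}{\chi_{1,j}\rho_\infty^*}+\frac{g_{ij}^2\rho_\infty^*}{\chi_{2,j}}\big)$. $\Phi^n$ solves $(D^c_xD^c_x\Phi^n)_i=-u^n_{h,i}$, $\sum_i\Delta x\Phi^n_i=0$. Modified entropy: $H^\Delta_\delta[F^n]=\frac12\|F^n\|_\Delta^2+\delta\langle J^n_h,D^c_x\Phi^n\rangle_2+\frac{\delta}{2\Delta t}\sum_i\Delta x\big((D^c_x\Phi^n)_i-(D^c_x\Phi^{n-1})_i\big)^2$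 (defined for $n\ge1$). *)

(* Defs.v *)
From mathcomp Require Import all_boot all_order all_algebra.
From mathcomp Require Import reals.
Set Implicit Arguments. Unset Strict Implicit. Unset Printing Implicit Defensive.
Import Order.TTheory GRing.Theory Num.Theory.
Local Open Scope ring_scope.

(* Space index i in Z/NZ is represented by 'I_N, with periodic successor
   [ordS i] (value (i+1) mod N) and predecessor [ord_pred i].
   Velocity index j in {-L+1,...,L} is represented by k : 'I_(2L),
   with j = k - L + 1; hence 1 - j corresponds to [rev_ord k]. *)

(* v_j = (j - 1/2) dv = (k - L + 1/2) dv *)
Definition vel (R : realType) (L : nat) (dv : R) (k : 'I_(2 * L)) : R :=
  (k%:R - L%:R + 2^-1) * dv.

Definition dens (R : realType) (N L : nat) (dv : R)
  (f : 'I_N -> 'I_(2 * L) -> R) (i : 'I_N) : R :=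
  \sum_(k < 2 * L) dv * f i k.

Definition curr (R : realType) (N L : nat) (dv : R)
  (f : 'I_N -> 'I_(2 * L) -> R) (i : 'I_N) : R :=
  \sum_(k < 2 * L) dv * vel dv k * f i k.

(* numerical flux at interface i+1/2 *)
Definition flux (R : realType) (N L : nat) (dv lam : R)
  (f : 'I_N -> 'I_(2 * L) -> R) (i : 'I_N) (k : 'I_(2 * L)) : R :=
  dv * (vel dv k / 2) * (f (ordS i) k + f i k)
  - dv * lam * (f (ordS i) k - f i k).

Definition Dc (R : realType) (N : nat) (dx : R) (u : 'I_N -> R) (i : 'I_N) : R :=
  (u (ordS i) - u (ord_pred i)) / (2 * dx).

Definition inner2 (R : realType) (N : nat) (dx : R) (u w : 'I_N -> R) : R :=
  \sum_(i < N) dx * u i * w i.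

Definition normD2 (R : realType) (N L : nat) (dx dv rho : R)
  (chi1 chi2 : 'I_(2 * L) -> R) (f g : 'I_N -> 'I_(2 * L) -> R) : R :=
  \sum_(i < N) \sum_(k < 2 * L)
     dx * dv * (f i k ^+ 2 / (chi1 k * rho) + g i k ^+ 2 * rho / chi2 k).

Definition linearized_scheme (R : realType) (N L : nat) (dt dx dv lam rho : R)
  (chi1 chi2 : 'I_(2 * L) -> R) (f g : nat -> 'I_N -> 'I_(2 * L) -> R) : Prop :=
  forall (n : nat) (i : 'I_N) (k : 'I_(2 * L)),
    (f n.+1 i k - f n i k) / dt
      + (flux dv lam (f n.+1) i k - flux dv lam (f n.+1) (ord_pred i) k) / (dx * dv)
    = - rho * chi1 k * dens dv (g n.+1) i - rho^-1 * f n.+1 i k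
  /\
    (g n.+1 i k - g n i k) / dt
      + (flux dv lam (g n.+1) i k - flux dv lam (g n.+1) (ord_pred i) k) / (dx * dv)
    = - rho^-1 * chi2 k * dens dv (f n.+1) i - rho * g n.+1 i k.

Definition is_potential (R : realType) (N L : nat) (dx dv : R)
  (f g : nat -> 'I_N -> 'I_(2 * L) -> R) (Phi : nat -> 'I_N -> R) : Prop :=
  forall n : nat,
    (forall i : 'I_N,
       Dc dx (Dc dx (Phi n)) i = - (dens dv (f n) i - dens dv (g n) i))
    /\ \sum_(i < N) dx * Phi n i = 0.

(* Modified entropy H^Delta_delta[F^n] (meaningful for n >= 1). *)
Definition Hmod (R : realType) (N L : nat) (dt dx dv rho delta : R)
  (chi1 chi2 : 'I_(2 * L) -> R) (f g : nat -> 'I_N -> 'I_(2 * L) -> R)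
  (Phi : nat -> 'I_N -> R) (n : nat) : R :=
  2^-1 * normD2 dx dv rho chi1 chi2 (f n) (g n)
  + delta * inner2 dx (fun i => curr dv (f n) i - curr dv (g n) i) (Dc dx (Phi n))
  + delta / (2 * dt) *
      \sum_(i < N) dx * (Dc dx (Phi n) i - Dc dx (Phi n.-1) i) ^+ 2.

(* Main.v *)
Require Import Defs.
From mathcomp Require Import all_boot all_order all_algebra.
From mathcomp Require Import reals.
From mathcomp Require Import ring lra zify.
Import Order.TTheory GRing.Theory Num.Theory.
Local Open Scope ring_scope.

Set Implicit Arguments. Unset Strict Implicit. Unset Printing Implicit Defensive.

Section Aux.
Variable R : realType.

Lemma sum_prod (I : finType) (p q : I -> R) :
  \sum_i \sum_j p i * q j = (\sum_i p i) * (\sum_j q j).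
Proof. rewrite mulr_suml; apply: eq_bigr => i _; by rewrite mulr_sumr. Qed.

Lemma cs (I : finType) (c y z : I -> R) : (forall i, 0 <= c i) ->
  (\sum_i c i * y i * z i) ^+ 2 <=
  (\sum_i c i * y i ^+ 2) * (\sum_i c i * z i ^+ 2).
Proof.
move=> c0.
have H : 0 <= \sum_i \sum_j c i * c j * (y i * z j - y j * z i) ^+ 2.
  apply: sumr_ge0 => i _; apply: sumr_ge0 => j _.
  by rewrite mulr_ge0 ?sqr_ge0 // mulr_ge0.
have E : \sum_i \sum_j c i * c j * (y i * z j - y j * z i) ^+ 2 =
   \sum_i \sum_j ((c i * y i ^+ 2) * (c j * z j ^+ 2))
 + \sum_i \sum_j ((c i * z i ^+ 2) * (c j * y j ^+ 2))
 - 2 * \sum_i \sum_j ((c i * y i * z i) * (c j * y j * z j)).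
  rewrite (eq_bigr (fun i => \sum_j ((c i * y i ^+ 2) * (c j * z j ^+ 2))
     + \sum_j ((c i * z i ^+ 2) * (c j * y j ^+ 2))
     - 2 * \sum_j ((c i * y i * z i) * (c j * y j * z j)))); last first.
    move=> i _; rewrite mulr_sumr -big_split -sumrB /=; apply: eq_bigr => j _; ring.
  by rewrite sumrB big_split /= mulr_sumr.
move: H; rewrite E !sum_prod => H.
rewrite expr2; lra.
Qed.

Lemma cs1 (I : finType) (y z : I -> R) :
  (\sum_i y i * z i) ^+ 2 <= (\sum_i y i ^+ 2) * (\sum_i z i ^+ 2).
Proof.
have -> : \sum_i y i * z i = \sum_i 1 * y i * z i by apply: eq_bigr => i _; rewrite mul1r.
have -> : \sum_i y i ^+ 2 = \sum_i 1 * y i ^+ 2 by apply: eq_bigr => i _; rewrite mul1r.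
have -> : \sum_i z i ^+ 2 = \sum_i 1 * z i ^+ 2 by apply: eq_bigr => i _; rewrite mul1r.
exact: (@cs I (fun _ => 1) y z (fun _ => ler01)).
Qed.

Lemma iter_injective (T : Type) (s : T -> T) n : injective s -> injective (iter n s).
Proof. move=> h; elim: n => [//|n IH] x y /= /h; exact: IH. Qed.

Lemma telesc N (s : 'I_N -> 'I_N) (a : 'I_N -> R) i m :
  a (iter m s i) - a i = \sum_(0 <= t < m) (a (s (iter t s i)) - a (iter t s i)).
Proof.
elim: m => [|m IH]; first by rewrite big_geq // subrr.
rewrite big_nat_recr //= -IH; ring.
Qed.

Lemma pair_bound N (s : 'I_N -> 'I_N) (a : 'I_N -> R) i m : (m <= N)%N ->
  (a (iter m s i) - a i) ^+ 2 <=
  N%:R * \sum_(t < N) (a (s (iter t s i)) - a (iter t s i)) ^+ 2.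
Proof.
move=> hm; rewrite telesc big_mkord (big_ord_widen N (fun t => a (s (iter t s i)) - a (iter t s i)) hm) big_mkcond /=.
set x := fun t : 'I_N => a (s (iter t s i)) - a (iter t s i).
have -> : \sum_(t < N) (if (t < m)%N then x t else 0) =
          \sum_(t < N) (if (t < m)%N then 1 else 0) * x t.
  by apply: eq_bigr => t _; case: ifP => _; rewrite ?mul1r ?mul0r.
apply: (le_trans (cs1 _ _)); apply: ler_wpM2r.
  by apply: sumr_ge0 => t _; exact: sqr_ge0.
have -> : (N%:R : R) = \sum_(t < N) 1 by rewrite sumr_const card_ord.
by apply: ler_sum => t _; case: ifP => _; rewrite ?expr1n ?expr0n.
Qed.

Lemma poincare N (s : 'I_N -> 'I_N) (a : 'I_N -> R) :
  injective s -> (forall i k : 'I_N, exists2 m, (m < N)%N & iter m s i = k) ->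
  \sum_i a i = 0 ->
  \sum_i a i ^+ 2 <= N%:R ^+ 2 * \sum_i (a (s i) - a i) ^+ 2.
Proof.
move=> sinj reach a0.
set T := fun i : 'I_N => \sum_(t < N) (a (s (iter t s i)) - a (iter t s i)) ^+ 2.
have Npos : forall i : 'I_N, (0 : R) < N%:R.
  by move=> i; rewrite ltr0n; case: i => [k hk] /=; lia.
have pt : forall i, a i ^+ 2 <= N%:R * T i.
  move=> i.
  have e : \sum_k (a i - a k) = N%:R * a i.
    by rewrite sumrB a0 subr0 sumr_const card_ord mulr_natl.
  have h1 : (N%:R * a i) ^+ 2 <= N%:R * \sum_k (a i - a k) ^+ 2.
    rewrite -e; have := cs1 (fun _ : 'I_N => 1) (fun k => a i - a k).
    have -> : \sum_(k < N) (1 : R) ^+ 2 = N%:R by rewrite sumr_const card_ord expr1n.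
    by under eq_bigr do rewrite mul1r.
  have h2 : \sum_k (a i - a k) ^+ 2 <= \sum_(k < N) (N%:R * T i).
    apply: ler_sum => k _; have [m hm <-] := reach i k.
    rewrite -sqrrN opprB; apply: pair_bound; exact: ltnW.
  move: h2; rewrite sumr_const card_ord -[(N%:R * T i) *+ N]mulr_natl => h2.
  have hN := Npos i.
  have h3 : (N%:R * a i) ^+ 2 <= N%:R * (N%:R * (N%:R * T i)) := le_trans h1 (ler_wpM2l (ltW hN) h2).
  rewrite exprMn in h3.
  by rewrite -(ler_pM2l hN) -(ler_pM2l hN) mulrA.
apply: (le_trans (ler_sum _ (fun i _ => pt i))).
rewrite -mulr_sumr /T exchange_big /=.
have -> : \sum_(t < N) \sum_i (a (s (iter t s i)) - a (iter t s i)) ^+ 2 =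
          \sum_(t < N) \sum_i (a (s i) - a i) ^+ 2.
  apply: eq_bigr => t _.
  by rewrite (reindex_inj (@iter_injective _ _ t sinj) (P := xpredT) (F := fun j => (a (s j) - a j) ^+ 2)).
rewrite sumr_const card_ord.
by rewrite -[(\sum_i _) *+ N]mulr_natl mulrA -expr2.
Qed.

Lemma iter_ordS_val N (i : 'I_N) m : val (iter m (@ordS N) i) = ((i + m) %% N)%N.
Proof.
elim: m => [|m IH] /=; first by rewrite addn0 modn_small.
rewrite IH -addn1 modnDml; congr (modn _ N); lia.
Qed.

Lemma reach1 N (i k : 'I_N) : exists2 m, (m < N)%N & iter m (@ordS N) i = k.
Proof.
have Np : (0 < N)%N by case: i => [x hx] /=; lia.
exists ((k + (N - i)) %% N)%N; first by rewrite ltn_mod.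
apply: val_inj; rewrite iter_ordS_val modnDmr.
have -> : (i + (k + (N - i)) = k + N)%N by case: i => [x hx] /=; lia.
by rewrite modnDr modn_small.
Qed.

Lemma iter_ordS2_val N (i : 'I_N) m :
  val (iter m (fun x => @ordS N (ordS x)) i) = ((i + 2 * m) %% N)%N.
Proof.
elim: m => [|m IH] /=; first by rewrite addn0 modn_small.
rewrite -[((_ %% N).+1)]addn1.
rewrite (modnDml (iter m (fun x : 'I_N => ordS (ordS x)) i).+1 1 N).
have -> : ((iter m (fun x : 'I_N => ordS (ordS x)) i).+1 + 1 = \val (iter m (fun x : 'I_N => ordS (ordS x)) i) + 2)%N by rewrite /=; lia.
rewrite IH modnDml; congr (modn _ N); lia.
Qed.

Lemma reach2 N (i k : 'I_N) : odd N ->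
  exists2 m, (m < N)%N & iter m (fun x => @ordS N (ordS x)) i = k.
Proof.
move=> oN.
have Np : (0 < N)%N by case: i => [x hx] /=; lia.
set h := (N./2).+1.
have h2 : (2 * h = N + 1)%N.
  have := odd_double_half N; rewrite oN /h -!muln2 /=; lia.
set c := (k + (N - i))%N.
exists ((c * h) %% N)%N; first by rewrite ltn_mod.
apply: val_inj; rewrite iter_ordS2_val -modnDmr modnMmr modnDmr.
have -> : (i + 2 * (c * h) = c * N + (k + N))%N.
  rewrite mulnCA h2 mulnDr muln1 /c; have := ltn_ord i; lia.
by rewrite modnMDl modnDr modn_small.
Qed.

Lemma sum_ordS N (F : 'I_N -> R) : \sum_i F (ordS i) = \sum_i F i.
Proof. by rewrite [RHS](reindex_inj (@ordS_inj N)). Qed.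

Lemma sum_ord_pred N (F : 'I_N -> R) : \sum_i F (ord_pred i) = \sum_i F i.
Proof. by rewrite [RHS](reindex_inj (@ord_pred_inj N)). Qed.

Lemma sbp N (u w : 'I_N -> R) :
  \sum_i u i * (w (ordS i) - w (ord_pred i)) =
  - \sum_i (u (ordS i) - u (ord_pred i)) * w i.
Proof.
have e1 : \sum_i u i * w (ordS i) = \sum_i u (ord_pred i) * w i.
  rewrite -(sum_ord_pred (fun i => u i * w (ordS i))).
  by apply: eq_bigr => i _; rewrite ord_predK.
have e2 : \sum_i u i * w (ord_pred i) = \sum_i u (ordS i) * w i.
  rewrite -(sum_ordS (fun i => u i * w (ord_pred i))).
  by apply: eq_bigr => i _; rewrite ordSK.
have -> : \sum_i u i * (w (ordS i) - w (ord_pred i)) =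
  \sum_i u i * w (ordS i) - \sum_i u i * w (ord_pred i).
  by rewrite -sumrB; apply: eq_bigr => i _; ring.
rewrite e1 e2 -sumrB -sumrN; apply: eq_bigr => i _; ring.
Qed.

Lemma G_bound N (dx : R) (Phi w : 'I_N -> R) : odd N -> 0 < dx ->
  (forall i, Dc dx (Dc dx Phi) i = w i) -> \sum_i dx * Phi i = 0 ->
  \sum_i (Dc dx Phi i) ^+ 2 <= 4 * N%:R ^+ 2 * dx ^+ 2 * \sum_i w i ^+ 2.
Proof.
move=> oN dx0 hw hm.
have dxn : dx != 0 by rewrite gt_eqF.
set G := Dc dx Phi.
set s := \sum_i G i ^+ 2.
have e1 : s = - \sum_i Phi i * w i.
  have -> : s = (2 * dx)^-1 * \sum_i G i * (Phi (ordS i) - Phi (ord_pred i)).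
    rewrite mulr_sumr; apply: eq_bigr => i _; rewrite expr2 {2}/G /Dc; ring.
  rewrite sbp mulrN mulr_sumr; congr (- _); apply: eq_bigr => i _.
  rewrite -hw -/G /Dc; ring.
have m0 : \sum_i Phi i = 0.
  by move: hm; rewrite -mulr_sumr => /eqP; rewrite mulf_eq0 (negbTE dxn) /= => /eqP.
have e2 : \sum_i Phi i ^+ 2 <= 4 * N%:R ^+ 2 * dx ^+ 2 * s.
  apply: (le_trans (poincare (s := fun x => ordS (ordS x)) _ _ m0)).
  - exact: (inj_comp (@ordS_inj N) (@ordS_inj N)).
  - by move=> i k; exact: reach2.
  rewrite -(sum_ord_pred (fun i => (Phi (ordS (ordS i)) - Phi i) ^+ 2)) /s mulr_sumr mulr_sumr.
  apply: ler_sum => i _; rewrite ord_predK /G /Dc.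
  rewrite le_eqVlt; apply/orP; left; apply/eqP.
  by field.
have e3 := cs1 Phi w.
have s0 : 0 <= s by apply: sumr_ge0 => i _; exact: sqr_ge0.
have W0 : 0 <= \sum_i w i ^+ 2 by apply: sumr_ge0 => i _; exact: sqr_ge0.
have key : s * s <= s * (4 * N%:R ^+ 2 * dx ^+ 2 * \sum_i w i ^+ 2).
  rewrite {1 2}e1 mulrNN -expr2 (le_trans e3) //.
  by rewrite mulrA; apply: ler_wpM2r => //; rewrite mulrC.
case: (ltrP 0 s) => sp; first by rewrite -(ler_pM2l sp).
have -> : s = 0 by apply/eqP; rewrite eq_le sp s0.
by rewrite mulr_ge0 // mulr_ge0 // ?sqr_ge0 // mulr_ge0 // ?sqr_ge0.
Qed.

Lemma sq_le (x y : R) : x ^+ 2 <= y ^+ 2 -> 0 <= y -> x <= y /\ - x <= y.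
Proof. move=> h y0; rewrite !expr2 in h; split; nra. Qed.

Lemma dsum3 (I J : finType) (F G H K : I -> J -> R) a b c :
  (forall i j, K i j = a * F i j + b * G i j + c * H i j) ->
  \sum_i \sum_j K i j = a * (\sum_i \sum_j F i j) + b * (\sum_i \sum_j G i j)
                        + c * (\sum_i \sum_j H i j).
Proof.
move=> h; rewrite !mulr_sumr -!big_split; apply: eq_bigr => i _ /=.
by rewrite !mulr_sumr -!big_split; apply: eq_bigr => j _ /=; exact: h.
Qed.

End Aux.

Section Kin.
Variables (R : realType) (N L : nat) (dv rho : R) (chi1 chi2 : 'I_(2 * L) -> R).
Hypotheses (dv0 : 0 < dv) (rho0 : 0 < rho) (c10 : forall k, 0 < chi1 k) (c20 : forall k, 0 < chi2 k)
  (s1 : \sum_k dv * chi1 k = 1) (s2 : \sum_k dv * chi2 k = 1).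

Lemma transport (w : 'I_N -> R) (a b : R) :
  \sum_i w i * ((a * (w (ordS i) + w i) - b * (w (ordS i) - w i))
             - (a * (w (ordS (ord_pred i)) + w (ord_pred i)) - b * (w (ordS (ord_pred i)) - w (ord_pred i))))
  = b * \sum_i (w (ordS i) - w i) ^+ 2.
Proof.
pose F := fun i => a * (w (ordS i) + w i) - b * (w (ordS i) - w i).
rewrite (_ : \sum_i _ = \sum_i w i * (F i - F (ord_pred i))) //.
have -> : \sum_i w i * (F i - F (ord_pred i)) = \sum_i w i * F i - \sum_i w i * F (ord_pred i).
  by rewrite -sumrB; apply: eq_bigr => i _; ring.
have -> : \sum_i w i * F (ord_pred i) = \sum_i w (ordS i) * F i.
  rewrite -(sum_ordS (fun i => w i * F (ord_pred i))).
  by apply: eq_bigr => i _; rewrite ordSK.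
rewrite -sumrB.
have -> : \sum_i (w i * F i - w (ordS i) * F i) =
   a * (\sum_i w i ^+ 2 - \sum_i w (ordS i) ^+ 2) + b * \sum_i (w (ordS i) - w i) ^+ 2.
  rewrite -sumrB mulr_sumr mulr_sumr -big_split /=; apply: eq_bigr => i _; rewrite /F; ring.
by rewrite (sum_ordS (fun i => w i ^+ 2)) subrr mulr0 add0r.
Qed.

Lemma wcs (w y h : 'I_(2 * L) -> R) : (forall k, 0 < w k) ->
  (\sum_k dv * y k * h k) ^+ 2 <=
  (\sum_k dv * y k ^+ 2 * w k) * (\sum_k dv * (h k ^+ 2 / w k)).
Proof.
move=> w0.
have := @cs R _ (fun k => dv * w k) y (fun k => h k / w k)
  (fun k => mulr_ge0 (ltW dv0) (ltW (w0 k))).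
have wn : forall k, w k != 0 by move=> k; rewrite gt_eqF.
have -> : \sum_k dv * w k * y k * (h k / w k) = \sum_k dv * y k * h k.
  by apply: eq_bigr => k _; field; exact: wn.
have -> : \sum_k dv * w k * y k ^+ 2 = \sum_k dv * y k ^+ 2 * w k.
  by apply: eq_bigr => k _; ring.
have -> : \sum_k dv * w k * (h k / w k) ^+ 2 = \sum_k dv * (h k ^+ 2 / w k).
  by apply: eq_bigr => k _; field; exact: wn.
done.
Qed.

Definition Af (f : 'I_N -> 'I_(2 * L) -> R) i := \sum_k dv * (f i k ^+ 2 / (chi1 k * rho)).
Definition Bg (g : 'I_N -> 'I_(2 * L) -> R) i := \sum_k dv * (g i k ^+ 2 * rho / chi2 k).

Lemma Af_ge0 f i : 0 <= Af f i.
Proof.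
apply: sumr_ge0 => k _; apply: mulr_ge0; first exact: ltW.
by apply: divr_ge0; [exact: sqr_ge0 | apply: mulr_ge0; apply: ltW].
Qed.

Lemma Bg_ge0 g i : 0 <= Bg g i.
Proof.
apply: sumr_ge0 => k _; apply: mulr_ge0; first exact: ltW.
by apply: divr_ge0; [apply: mulr_ge0; [exact: sqr_ge0 | exact: ltW] | exact: ltW].
Qed.

Lemma dens_f_bound f i : dens dv f i ^+ 2 <= rho * Af f i.
Proof.
have := wcs (fun _ => 1) (f i) (fun k => mulr_gt0 (c10 k) rho0).
have -> : \sum_k dv * 1 * f i k = dens dv f i by apply: eq_bigr => k _; rewrite mulr1.
have -> : \sum_k dv * 1 ^+ 2 * (chi1 k * rho) = rho.
  have e : rho = rho * \sum_k dv * chi1 k by rewrite s1 mulr1.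
  rewrite [RHS]e mulr_sumr; apply: eq_bigr => k _; ring.
done.
Qed.

Lemma dens_g_bound g i : dens dv g i ^+ 2 <= rho^-1 * Bg g i.
Proof.
have rn : rho != 0 by rewrite gt_eqF.
have := wcs (fun _ => 1) (g i) (fun k => divr_gt0 (c20 k) rho0).
have -> : \sum_k dv * 1 * g i k = dens dv g i by apply: eq_bigr => k _; rewrite mulr1.
have -> : \sum_k dv * 1 ^+ 2 * (chi2 k / rho) = rho^-1.
  have e : rho^-1 = rho^-1 * \sum_k dv * chi2 k by rewrite s2 mulr1.
  rewrite [RHS]e mulr_sumr; apply: eq_bigr => k _; ring.
have -> : \sum_k dv * (g i k ^+ 2 / (chi2 k / rho)) = Bg g i.
  apply: eq_bigr => k _; have := c20 k; rewrite lt0r => /andP [h _]; field.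
  by rewrite h rn.
done.
Qed.

Lemma curr_f_bound D1 f i : \sum_k dv * vel dv k ^+ 2 * chi1 k <= D1 ->
  curr dv f i ^+ 2 <= rho * D1 * Af f i.
Proof.
move=> hD.
have := wcs (vel dv) (f i) (fun k => mulr_gt0 (c10 k) rho0).
have -> : \sum_k dv * vel dv k ^+ 2 * (chi1 k * rho) = rho * \sum_k dv * vel dv k ^+ 2 * chi1 k.
  rewrite mulr_sumr; apply: eq_bigr => k _; ring.
move=> h; apply: (le_trans h); rewrite -mulrA -[X in _ <= X]mulrA; apply: ler_wpM2l; first exact: ltW.
apply: ler_wpM2r => //; exact: Af_ge0.
Qed.

Lemma curr_g_bound D2 g i : \sum_k dv * vel dv k ^+ 2 * chi2 k <= D2 ->
  curr dv g i ^+ 2 <= rho^-1 * D2 * Bg g i.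
Proof.
move=> hD.
have rn : rho != 0 by rewrite gt_eqF.
have := wcs (vel dv) (g i) (fun k => divr_gt0 (c20 k) rho0).
have -> : \sum_k dv * vel dv k ^+ 2 * (chi2 k / rho) = rho^-1 * \sum_k dv * vel dv k ^+ 2 * chi2 k.
  rewrite mulr_sumr; apply: eq_bigr => k _; ring.
have -> : \sum_k dv * (g i k ^+ 2 / (chi2 k / rho)) = Bg g i.
  apply: eq_bigr => k _; have := c20 k; rewrite lt0r => /andP [h _]; field.
  by rewrite h rn.
move=> h; apply: (le_trans h); rewrite -!mulrA; apply: ler_wpM2l.
  by rewrite invr_ge0; exact: ltW.
apply: ler_wpM2r => //; exact: Bg_ge0.
Qed.

Definition nrm (f g : 'I_N -> 'I_(2 * L) -> R) i := Af f i + Bg g i.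

Lemma nrm_ge0 f g i : 0 <= nrm f g i.
Proof. by rewrite /nrm addr_ge0 ?Af_ge0 ?Bg_ge0. Qed.

Lemma normD2E dx f g : normD2 dx dv rho chi1 chi2 f g = dx * \sum_i nrm f g i.
Proof.
rewrite /normD2 mulr_sumr; apply: eq_bigr => i _.
rewrite /nrm /Af /Bg -big_split mulr_sumr; apply: eq_bigr => k _ /=; ring.
Qed.

Variables (D1 D2 : R).
Hypotheses (D10 : 0 <= D1) (D20 : 0 <= D2)
  (hD1 : \sum_k dv * vel dv k ^+ 2 * chi1 k <= D1)
  (hD2 : \sum_k dv * vel dv k ^+ 2 * chi2 k <= D2).

Definition c3 := 2 * (rho * (1 + D1) + rho^-1 * (1 + D2)).

Lemma c3_ge0 : 0 <= c3.
Proof.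
have r1 : 0 < rho^-1 by rewrite invr_gt0.
have a1 : 0 <= rho * (1 + D1) by apply: mulr_ge0; [exact: (ltW rho0) | rewrite addr_ge0].
have a2 : 0 <= rho^-1 * (1 + D2) by apply: mulr_ge0; [exact: (ltW r1) | rewrite addr_ge0].
rewrite /c3; lra.
Qed.

Lemma comb_bound (x y A B p q : R) : 0 <= A -> 0 <= B -> 0 <= p -> 0 <= q ->
  p <= 2 * (rho * (1 + D1)) -> q <= 2 * (rho^-1 * (1 + D2)) ->
  x ^+ 2 <= p / 2 * A -> y ^+ 2 <= q / 2 * B ->
  (x - y) ^+ 2 <= c3 * (A + B).
Proof.
move=> A0 B0 p0 q0 hp hq hx hy.
have r1 : 0 < rho^-1 by rewrite invr_gt0.
have h1 : (x - y) ^+ 2 <= 2 * x ^+ 2 + 2 * y ^+ 2.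
  have := sqr_ge0 (x + y); rewrite !expr2; lra.
have hP : 0 <= 2 * (rho * (1 + D1)) by apply: mulr_ge0 => //; apply: mulr_ge0; [exact: (ltW rho0) | rewrite addr_ge0].
have hQ : 0 <= 2 * (rho^-1 * (1 + D2)) by apply: mulr_ge0 => //; apply: mulr_ge0; [exact: (ltW r1) | rewrite addr_ge0].
have e1 : p * A <= 2 * (rho * (1 + D1)) * A by apply: ler_wpM2r.
have e2 : q * B <= 2 * (rho^-1 * (1 + D2)) * B by apply: ler_wpM2r.
have e3 : 0 <= 2 * (rho * (1 + D1)) * B by apply: mulr_ge0.
have e4 : 0 <= 2 * (rho^-1 * (1 + D2)) * A by apply: mulr_ge0.
have ex : 2 * x ^+ 2 <= p * A by move: hx; rewrite mulrAC; lra.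
have ey : 2 * y ^+ 2 <= q * B by move: hy; rewrite mulrAC; lra.
rewrite /c3 mulrDl mulrDr mulrDr.
lra.
Qed.

Lemma u_bound f g i : (dens dv f i - dens dv g i) ^+ 2 <= c3 * nrm f g i.
Proof.
have r1 : 0 < rho^-1 by rewrite invr_gt0.
apply: (comb_bound (p := 2 * rho) (q := 2 * rho^-1)) (Af_ge0 _ _) (Bg_ge0 _ _) _ _ _ _ _ _.
- by apply: mulr_ge0 => //; exact: ltW.
- by apply: mulr_ge0 => //; exact: ltW.
- apply: ler_wpM2l => //; rewrite -{1}[rho]mulr1; apply: ler_wpM2l; [exact: ltW | have := D10; lra].
- apply: ler_wpM2l => //; rewrite -{1}[rho^-1]mulr1; apply: ler_wpM2l; [exact: ltW | have := D20; lra].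
- rewrite (_ : 2 * rho / 2 = rho); last by rewrite mulrC mulKf // pnatr_eq0. exact: dens_f_bound.
- rewrite (_ : 2 * rho^-1 / 2 = rho^-1); last by rewrite mulrC mulKf // pnatr_eq0. exact: dens_g_bound.
Qed.

Lemma J_bound f g i : (curr dv f i - curr dv g i) ^+ 2 <= c3 * nrm f g i.
Proof.
have r1 : 0 < rho^-1 by rewrite invr_gt0.
apply: (comb_bound (p := 2 * (rho * D1)) (q := 2 * (rho^-1 * D2))) (Af_ge0 _ _) (Bg_ge0 _ _) _ _ _ _ _ _.
- by apply: mulr_ge0 => //; apply: mulr_ge0 => //; exact: ltW.
- by apply: mulr_ge0 => //; apply: mulr_ge0 => //; exact: ltW.
- apply: ler_wpM2l => //; apply: ler_wpM2l; [exact: ltW | have := D10; lra].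
- apply: ler_wpM2l => //; apply: ler_wpM2l; [exact: ltW | have := D20; lra].
- rewrite (_ : 2 * (rho * D1) / 2 = rho * D1); last by rewrite mulrC mulKf // pnatr_eq0. exact: curr_f_bound.
- rewrite (_ : 2 * (rho^-1 * D2) / 2 = rho^-1 * D2); last by rewrite mulrC mulKf // pnatr_eq0. exact: curr_g_bound.
Qed.

Lemma transport_flux lam (f : 'I_N -> 'I_(2 * L) -> R) k :
  \sum_i f i k * (flux dv lam f i k - flux dv lam f (ord_pred i) k)
  = dv * lam * \sum_i (f (ordS i) k - f i k) ^+ 2.
Proof. exact: (transport (fun i => f i k) (dv * (vel dv k / 2)) (dv * lam)). Qed.

Lemma energy (dt dx lam : R) (fX fY gX gY : 'I_N -> 'I_(2 * L) -> R) :
  0 < dt -> 0 < dx ->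
  (forall i k, (fX i k - fY i k) / dt
      + (flux dv lam fX i k - flux dv lam fX (ord_pred i) k) / (dx * dv)
    = - rho * chi1 k * dens dv gX i - rho^-1 * fX i k) ->
  (forall i k, (gX i k - gY i k) / dt
      + (flux dv lam gX i k - flux dv lam gX (ord_pred i) k) / (dx * dv)
    = - rho^-1 * chi2 k * dens dv fX i - rho * gX i k) ->
  \sum_i \sum_k dx * dv * (fX i k * (fX i k - fY i k) / (chi1 k * rho)
                          + gX i k * (gX i k - gY i k) * rho / chi2 k)
  = - (dt * (lam * \sum_i nrm (fun i k => fX (ordS i) k - fX i k)
                               (fun i k => gX (ordS i) k - gX i k) i))
    - dt * (dx * \sum_i (Af fX i / rho + rho * Bg gX i
                         + 2 * (dens dv fX i * dens dv gX i))).
Proof.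
move=> dt0 dx0 Hf Hg.
have dtn : dt != 0 by rewrite gt_eqF.
have dxn : dx != 0 by rewrite gt_eqF.
have dvn : dv != 0 by rewrite gt_eqF.
have rn : rho != 0 by rewrite gt_eqF.
pose T i k := fX i k * (flux dv lam fX i k - flux dv lam fX (ord_pred i) k) / (chi1 k * rho)
            + gX i k * (flux dv lam gX i k - flux dv lam gX (ord_pred i) k) * rho / chi2 k.
pose C i k := dv * fX i k * dens dv gX i + dv * (fX i k ^+ 2 / (chi1 k * rho)) / rho
            + dv * gX i k * dens dv fX i + rho * (dv * (gX i k ^+ 2 * rho / chi2 k)).
have pt : forall i k, dx * dv * (fX i k * (fX i k - fY i k) / (chi1 k * rho)
                          + gX i k * (gX i k - gY i k) * rho / chi2 k)
          = - (dt * T i k) - dt * (dx * C i k).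
  move=> i k.
  have c1n : chi1 k != 0 by rewrite gt_eqF.
  have c2n : chi2 k != 0 by rewrite gt_eqF.
  have ef : fX i k - fY i k = dt * (- rho * chi1 k * dens dv gX i - rho^-1 * fX i k
            - (flux dv lam fX i k - flux dv lam fX (ord_pred i) k) / (dx * dv)).
    by rewrite -(Hf i k); field; rewrite dvn dxn dtn.
  have eg : gX i k - gY i k = dt * (- rho^-1 * chi2 k * dens dv fX i - rho * gX i k
            - (flux dv lam gX i k - flux dv lam gX (ord_pred i) k) / (dx * dv)).
    by rewrite -(Hg i k); field; rewrite dvn dxn dtn.
  by rewrite ef eg /T /C; field; rewrite c2n rn c1n dvn dxn.
rewrite (eq_bigr (fun i => \sum_k (- (dt * T i k) - dt * (dx * C i k)))); last first.
  by move=> i _; apply: eq_bigr => k _; exact: pt.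
have eT : \sum_i \sum_k T i k = lam * \sum_i nrm (fun i k => fX (ordS i) k - fX i k)
                               (fun i k => gX (ordS i) k - gX i k) i.
  rewrite exchange_big /= /nrm /Af /Bg mulr_sumr.
  rewrite (eq_bigr (fun i => \sum_k (lam * (dv * ((fX (ordS i) k - fX i k) ^+ 2 / (chi1 k * rho)))
        + lam * (dv * ((gX (ordS i) k - gX i k) ^+ 2 * rho / chi2 k))))); last first.
    by move=> i _; rewrite -big_split mulr_sumr; apply: eq_bigr => k _ /=; ring.
  rewrite [RHS]exchange_big /=; apply: eq_bigr => k _.
  rewrite big_split /= /T big_split /=.
  have -> : \sum_i fX i k * (flux dv lam fX i k - flux dv lam fX (ord_pred i) k) / (chi1 k * rho)
      = (chi1 k * rho)^-1 * \sum_i fX i k * (flux dv lam fX i k - flux dv lam fX (ord_pred i) k).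
    by rewrite mulr_sumr; apply: eq_bigr => i _; rewrite mulrC.
  have -> : \sum_i gX i k * (flux dv lam gX i k - flux dv lam gX (ord_pred i) k) * rho / chi2 k
      = (rho / chi2 k) * \sum_i gX i k * (flux dv lam gX i k - flux dv lam gX (ord_pred i) k).
    by rewrite mulr_sumr; apply: eq_bigr => i _; ring.
  rewrite !transport_flux.
  congr (_ + _).
    rewrite mulr_sumr mulr_sumr; apply: eq_bigr => i _; ring.
  rewrite mulr_sumr mulr_sumr; apply: eq_bigr => i _; ring.
have eC : \sum_i \sum_k C i k = \sum_i (Af fX i / rho + rho * Bg gX i
                         + 2 * (dens dv fX i * dens dv gX i)).
  apply: eq_bigr => i _; rewrite /C !big_split /=.
  have -> : \sum_k dv * fX i k * dens dv gX i = dens dv fX i * dens dv gX i by rewrite -mulr_suml.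
  have -> : \sum_k dv * gX i k * dens dv fX i = dens dv fX i * dens dv gX i by rewrite -mulr_suml mulrC.
  have -> : \sum_k dv * (fX i k ^+ 2 / (chi1 k * rho)) / rho = Af fX i / rho by rewrite -mulr_suml.
  have -> : \sum_k rho * (dv * (gX i k ^+ 2 * rho / chi2 k)) = rho * Bg gX i by rewrite -mulr_sumr.
  ring.
rewrite -eT -eC !mulr_sumr -sumrN -sumrB; apply: eq_bigr => i _.
by rewrite !mulr_sumr -sumrN -sumrB.
Qed.

Lemma Dloc_ge0 f g i : 0 <= Af f i / rho + rho * Bg g i + 2 * (dens dv f i * dens dv g i).
Proof.
have rn : rho != 0 by rewrite gt_eqF.
set x := dens dv f i; set y := dens dv g i.
have e1 : (x / rho) ^+ 2 <= Af f i / rho.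
  have h := dens_f_bound f i.
  rewrite expr_div_n.
  have : x ^+ 2 / rho ^+ 2 <= rho * Af f i / rho ^+ 2.
    by apply: ler_wpM2r => //; rewrite invr_ge0 exprn_ge0 // ltW.
  by have -> : rho * Af f i / rho ^+ 2 = Af f i / rho by field.
have e2 : (rho * y) ^+ 2 <= rho * Bg g i.
  have h := dens_g_bound g i.
  rewrite exprMn.
  have : rho ^+ 2 * y ^+ 2 <= rho ^+ 2 * (rho^-1 * Bg g i).
    by apply: ler_wpM2l => //; rewrite exprn_ge0 // ltW.
  by have -> : rho ^+ 2 * (rho^-1 * Bg g i) = rho * Bg g i by field.
have e3 : 2 * (x * y) = 2 * ((x / rho) * (rho * y)) by field.
have := sqr_ge0 (x / rho + rho * y); rewrite sqrrD e3; lra.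
Qed.

Lemma nrm_coer f g i :
  nrm f g i <= (rho + rho^-1) * (Af f i / rho + rho * Bg g i + 2 * (dens dv f i * dens dv g i)
                                 + (dens dv f i - dens dv g i) ^+ 2).
Proof.
have rn : rho != 0 by rewrite gt_eqF.
have r1 : 0 < rho^-1 by rewrite invr_gt0.
have hA := Af_ge0 f i; have hB := Bg_ge0 g i.
set x := dens dv f i; set y := dens dv g i.
have e : 2 * (x * y) + (x - y) ^+ 2 = x ^+ 2 + y ^+ 2 by rewrite sqrrB; ring.
have a0 : 0 <= Af f i / rho by rewrite divr_ge0 // ltW.
have b0 : 0 <= rho * Bg g i by rewrite mulr_ge0 // ltW.
have s0 : 0 <= x ^+ 2 + y ^+ 2 by rewrite addr_ge0 ?sqr_ge0.
have h1 : Af f i + Bg g i <= (rho + rho^-1) * (Af f i / rho + rho * Bg g i).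
  rewrite mulrDr !mulrDl.
  have -> : rho * (Af f i / rho) = Af f i by field.
  have -> : rho^-1 * (rho * Bg g i) = Bg g i by field.
  have : 0 <= rho^-1 * (Af f i / rho) by rewrite mulr_ge0 // ltW.
  have : 0 <= rho * (rho * Bg g i) by rewrite mulr_ge0 // ltW.
  lra.
rewrite /nrm (le_trans h1) // -addrA e; apply: ler_wpM2l; last lra.
by rewrite addr_ge0 // ltW.
Qed.

Lemma sum_Dc (dx : R) (w : 'I_N -> R) : \sum_i Dc dx w i = 0.
Proof.
rewrite /Dc -mulr_suml sumrB (sum_ordS w) (sum_ord_pred w) subrr mul0r //.
Qed.

Lemma dens_diff (f : 'I_N -> 'I_(2 * L) -> R) (i : 'I_N) : dens dv (fun i k => f (ordS i) k - f i k) i = dens dv f (ordS i) - dens dv f i.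
Proof. by rewrite /dens -sumrB; apply: eq_bigr => k _; rewrite mulrBr. Qed.

Lemma u_poincare (f g : 'I_N -> 'I_(2 * L) -> R) :
  \sum_i (dens dv f i - dens dv g i) = 0 ->
  \sum_i (dens dv f i - dens dv g i) ^+ 2 <=
    N%:R ^+ 2 * (c3 * \sum_i nrm (fun i k => f (ordS i) k - f i k) (fun i k => g (ordS i) k - g i k) i).
Proof.
move=> h0.
apply: (le_trans (poincare (s := @ordS N) (a := fun i => dens dv f i - dens dv g i) (@ordS_inj N) (@reach1 N) h0)).
apply: ler_wpM2l; first exact: exprn_ge0.
rewrite mulr_sumr; apply: ler_sum => i _.
have := u_bound (fun i k => f (ordS i) k - f i k) (fun i k => g (ordS i) k - g i k) i.
rewrite !dens_diff; congr (_ <= _); ring.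
Qed.

Lemma inner2E (dx : R) (u w : 'I_N -> R) : inner2 dx u w = dx * \sum_i u i * w i.
Proof. by rewrite /inner2 mulr_sumr; apply: eq_bigr => i _; rewrite mulrA. Qed.

Lemma SU_bound (f g : 'I_N -> 'I_(2 * L) -> R) :
  \sum_i (dens dv f i - dens dv g i) ^+ 2 <= c3 * \sum_i nrm f g i.
Proof. rewrite mulr_sumr; apply: ler_sum => i _; exact: u_bound. Qed.

Lemma SJ_bound (f g : 'I_N -> 'I_(2 * L) -> R) :
  \sum_i (curr dv f i - curr dv g i) ^+ 2 <= c3 * \sum_i nrm f g i.
Proof. rewrite mulr_sumr; apply: ler_sum => i _; exact: J_bound. Qed.

Lemma JG_bound (dx : R) (f g : 'I_N -> 'I_(2 * L) -> R) (Phi : 'I_N -> R) :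
  odd N -> 0 < dx ->
  (forall i, Dc dx (Dc dx Phi) i = - (dens dv f i - dens dv g i)) ->
  \sum_i dx * Phi i = 0 ->
  (inner2 dx (fun i => curr dv f i - curr dv g i) (Dc dx Phi)) ^+ 2 <=
  (2 * N%:R * c3 * dx * normD2 dx dv rho chi1 chi2 f g) ^+ 2.
Proof.
move=> oN dx0 hP hm.
rewrite inner2E normD2E.
set T := \sum_i nrm f g i.
have T0 : 0 <= T by apply: sumr_ge0 => i _; exact: nrm_ge0.
have c0 := c3_ge0.
have hG := G_bound oN dx0 hP hm.
have eW : \sum_i (- (dens dv f i - dens dv g i)) ^+ 2 = \sum_i (dens dv f i - dens dv g i) ^+ 2.
  by apply: eq_bigr => i _; rewrite sqrrN.
rewrite eW in hG.
have hU := SU_bound f g.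
have hJ := SJ_bound f g.
have hcs := cs1 (fun i => curr dv f i - curr dv g i) (Dc dx Phi).
set SJ := \sum_i (curr dv f i - curr dv g i) ^+ 2 in hJ hcs.
set SG := \sum_i (Dc dx Phi i) ^+ 2 in hG hcs.
set SU := \sum_i (dens dv f i - dens dv g i) ^+ 2 in hG hU.
set P := \sum_i (curr dv f i - curr dv g i) * Dc dx Phi i in hcs *.
have SJ0 : 0 <= SJ by apply: sumr_ge0 => i _; exact: sqr_ge0.
have SG0 : 0 <= SG by apply: sumr_ge0 => i _; exact: sqr_ge0.
have k1 : 0 <= 4 * N%:R ^+ 2 * dx ^+ 2 by rewrite !mulr_ge0 // ?exprn_ge0 // ltW.
have h1 : SG <= 4 * N%:R ^+ 2 * dx ^+ 2 * (c3 * T).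
  by apply: (le_trans hG); apply: ler_wpM2l.
have h2 : P ^+ 2 <= (c3 * T) * (4 * N%:R ^+ 2 * dx ^+ 2 * (c3 * T)).
  apply: (le_trans hcs); apply: (le_trans (ler_wpM2r SG0 hJ)); apply: ler_wpM2l => //.
  exact: mulr_ge0.
rewrite exprMn.
have -> : (2 * N%:R * c3 * dx * (dx * T)) ^+ 2 = dx ^+ 2 * ((c3 * T) * (4 * N%:R ^+ 2 * dx ^+ 2 * (c3 * T))).
  by ring.
exact: (ler_wpM2l (sqr_ge0 dx) h2).
Qed.

Lemma W3_bound (dx : R) (fX gX fY gY : 'I_N -> 'I_(2 * L) -> R) (PX PY : 'I_N -> R) :
  odd N -> 0 < dx ->
  (forall i, Dc dx (Dc dx PX) i = - (dens dv fX i - dens dv gX i)) ->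
  \sum_i dx * PX i = 0 ->
  (forall i, Dc dx (Dc dx PY) i = - (dens dv fY i - dens dv gY i)) ->
  \sum_i dx * PY i = 0 ->
  \sum_i dx * (Dc dx PX i - Dc dx PY i) ^+ 2 <=
  8 * N%:R ^+ 2 * c3 * dx ^+ 2 * (normD2 dx dv rho chi1 chi2 fX gX + normD2 dx dv rho chi1 chi2 fY gY).
Proof.
move=> oN dx0 hX mX hY mY.
pose Psi := fun i => PX i - PY i.
have eD : forall i, Dc dx PX i - Dc dx PY i = Dc dx Psi i by move=> i; rewrite /Dc /Psi /=; ring.
have eDD : forall i, Dc dx (Dc dx Psi) i =
    - (dens dv fX i - dens dv gX i) - - (dens dv fY i - dens dv gY i).
  by move=> i; rewrite -hX -hY /Dc /Psi /=; ring.
have mP : \sum_i dx * Psi i = 0.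
  rewrite (eq_bigr (fun i => dx * PX i - dx * PY i)); last by move=> i _; rewrite /Psi mulrBr.
  by rewrite sumrB mX mY subrr.
have hG := G_bound oN dx0 eDD mP.
rewrite -mulr_sumr.
under eq_bigr do rewrite eD.
have hU := SU_bound fX gX; have hU' := SU_bound fY gY.
rewrite !normD2E.
set TX := \sum_i nrm fX gX i in hU *; set TY := \sum_i nrm fY gY i in hU' *.
have hW : \sum_i (- (dens dv fX i - dens dv gX i) - - (dens dv fY i - dens dv gY i)) ^+ 2
   <= 2 * (c3 * TX) + 2 * (c3 * TY).
  apply: le_trans (_ : \sum_i (2 * (dens dv fX i - dens dv gX i) ^+ 2 + 2 * (dens dv fY i - dens dv gY i) ^+ 2) <= _).
    apply: ler_sum => i _.
    have := sqr_ge0 ((dens dv fX i - dens dv gX i) + (dens dv fY i - dens dv gY i)).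
    rewrite !expr2; lra.
  rewrite big_split /= -!mulr_sumr; lra.
have k1 : 0 <= 4 * N%:R ^+ 2 * dx ^+ 2 by rewrite !mulr_ge0 // ?exprn_ge0 // ltW.
have h1 := le_trans hG (ler_wpM2l k1 hW).
have -> : 8 * N%:R ^+ 2 * c3 * dx ^+ 2 * (dx * TX + dx * TY) =
          dx * (4 * N%:R ^+ 2 * dx ^+ 2 * (2 * (c3 * TX) + 2 * (c3 * TY))) by ring.
by apply: ler_wpM2l => //; exact: ltW.
Qed.

Lemma main_step (lam dtmax : R) : odd N -> 0 < lam -> 0 < dtmax ->
  exists2 delta2 : R, 0 < delta2 &
    forall dt : R, 0 < dt -> dt <= dtmax ->
    forall delta : R, 0 < delta -> delta <= delta2 ->
    exists2 K : R, 0 < K &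
      forall (f g : nat -> 'I_N -> 'I_(2 * L) -> R) (Phi : nat -> 'I_N -> R),
        linearized_scheme dt (2 * lam * dt) dv lam rho chi1 chi2 f g ->
        is_potential (2 * lam * dt) dv f g Phi ->
        forall n : nat,
          Hmod dt (2 * lam * dt) dv rho delta chi1 chi2 f g Phi n.+1
          - Hmod dt (2 * lam * dt) dv rho delta chi1 chi2 f g Phi n
          <= - (dt * K * normD2 (2 * lam * dt) dv rho chi1 chi2 (f n.+1) (g n.+1)).
Proof.
move=> oN lam0 dtm0.
have rho0' := rho0; have dv0' := dv0; have D10' := D10; have D20' := D20.
have r1 : 0 < rho^-1 by rewrite invr_gt0.
have c0 := c3_ge0.
have Nn0 : (0 : R) <= N%:R by [].
set r := rho + rho^-1.
have r0 : 0 < r by rewrite /r; lra.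
set M := r * (1 + 2 * dtmax * N%:R ^+ 2 * c3).
have M0 : 0 < M.
  apply: mulr_gt0 => //.
  have : 0 <= 2 * dtmax * N%:R ^+ 2 * c3.
    apply: mulr_ge0 => //; apply: mulr_ge0; last exact: exprn_ge0.
    apply: mulr_ge0 => //; exact: ltW.
  lra.
set C7 := 4 * N%:R * lam * c3 + 16 * N%:R ^+ 2 * c3 * lam ^+ 2.
have C70 : 0 <= C7.
  have t1 : 0 <= 4 * N%:R * lam * c3 := mulr_ge0 (mulr_ge0 (mulr_ge0 (ler0n _ 4) Nn0) (ltW lam0)) c0.
  have t2 : 0 <= 16 * N%:R ^+ 2 * c3 * lam ^+ 2 :=
    mulr_ge0 (mulr_ge0 (mulr_ge0 (ler0n _ 16) (exprn_ge0 2 Nn0)) c0) (exprn_ge0 2 (ltW lam0)).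
  by rewrite /C7 addr_ge0.
set den := 6 * C7 * M + 4 * C7 * dtmax + 1.
have den1 : 1 <= den.
  have : 0 <= 6 * C7 * M by apply: mulr_ge0; [apply: mulr_ge0 | exact: ltW].
  have : 0 <= 4 * C7 * dtmax by apply: mulr_ge0; [apply: mulr_ge0 | exact: ltW].
  rewrite /den; lra.
have den0 : 0 < den by lra.
exists den^-1; first by rewrite invr_gt0.
move=> dt dt0 dtle delta d0 dle.
exists (2 * M)^-1; first by rewrite invr_gt0 mulr_gt0.
move=> f g Phi Hs Hp n.
set dx := 2 * lam * dt.
have dx0 : 0 < dx by rewrite /dx !mulr_gt0.
have [pX mX] := Hp n.+1.
have [pY mY] := Hp n.
have E := energy dt0 dx0 (fun i k => (Hs n i k).1) (fun i k => (Hs n i k).2).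
set nX := normD2 dx dv rho chi1 chi2 (f n.+1) (g n.+1).
set nY := normD2 dx dv rho chi1 chi2 (f n) (g n).
set nXY := normD2 dx dv rho chi1 chi2 (fun i k => f n.+1 i k - f n i k) (fun i k => g n.+1 i k - g n i k).
have EL : \sum_i \sum_k dx * dv * (f n.+1 i k * (f n.+1 i k - f n i k) / (chi1 k * rho)
                          + g n.+1 i k * (g n.+1 i k - g n i k) * rho / chi2 k)
          = 2^-1 * nX + (- 2^-1) * nY + 2^-1 * nXY.
  rewrite /nX /nY /nXY /normD2; apply: dsum3 => i k /=.
  by field; rewrite (gt_eqF (c20 k)) (gt_eqF rho0) (gt_eqF (c10 k)).
rewrite EL in E.
set S1 := \sum_i nrm _ _ i in E.
set SD := \sum_i (Af (f n.+1) i / rho + _ + _) in E.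
have nrm0 : forall f' g' : 'I_N -> 'I_(2 * L) -> R, 0 <= normD2 dx dv rho chi1 chi2 f' g'.
  by move=> f' g'; rewrite normD2E; apply: mulr_ge0; [exact: ltW | apply: sumr_ge0 => i _; exact: nrm_ge0].
have nX0 : 0 <= nX := nrm0 _ _.
have nY0 : 0 <= nY := nrm0 _ _.
have nXY0 : 0 <= nXY := nrm0 _ _.
have S10 : 0 <= S1 by apply: sumr_ge0 => i _; exact: nrm_ge0.
have SD0 : 0 <= SD by apply: sumr_ge0 => i _; exact: Dloc_ge0.
have coer : nX <= M * (lam * S1 + dx * SD).
  have u0 : \sum_i (dens dv (f n.+1) i - dens dv (g n.+1) i) = 0.
    have := sum_Dc dx (Dc dx (Phi n.+1)).
    under eq_bigr do rewrite pX.
    by rewrite sumrN => /eqP; rewrite oppr_eq0 => /eqP.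
  have hu := u_poincare u0.
  have h1 : nX <= r * (dx * SD + dx * \sum_i (dens dv (f n.+1) i - dens dv (g n.+1) i) ^+ 2).
    rewrite /nX normD2E -mulrDr mulrCA; apply: ler_wpM2l; first exact: ltW.
    rewrite -big_split mulr_sumr; apply: ler_sum => i _ /=; exact: nrm_coer.
  apply: (le_trans h1).
  have h2 : dx * \sum_i (dens dv (f n.+1) i - dens dv (g n.+1) i) ^+ 2
            <= 2 * dtmax * N%:R ^+ 2 * c3 * (lam * S1).
    apply: (le_trans (ler_wpM2l (ltW dx0) hu)).
    have -> : dx * (N%:R ^+ 2 * (c3 * S1)) = dt * (2 * N%:R ^+ 2 * c3 * (lam * S1)) by rewrite /dx; ring.
    have -> : 2 * dtmax * N%:R ^+ 2 * c3 * (lam * S1) = dtmax * (2 * N%:R ^+ 2 * c3 * (lam * S1)) by ring.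
    apply: ler_wpM2r => //.
    apply: mulr_ge0; last by apply: mulr_ge0 => //; exact: ltW.
    by apply: mulr_ge0 => //; apply: mulr_ge0 => //; exact: exprn_ge0.
  have h3 : 0 <= dx * SD by apply: mulr_ge0 => //; exact: ltW.
  have h4 : 0 <= 2 * dtmax * N%:R ^+ 2 * c3 * (lam * S1).
    apply: mulr_ge0; last by apply: mulr_ge0 => //; exact: ltW.
    apply: mulr_ge0 => //; apply: mulr_ge0; [apply: mulr_ge0 => //; exact: ltW | exact: exprn_ge0].
  rewrite /M -mulrA; apply: ler_wpM2l; first exact: ltW.
  have : 2 * dtmax * N%:R ^+ 2 * c3 * (lam * S1) <= 2 * dtmax * N%:R ^+ 2 * c3 * (lam * S1 + dx * SD).
    apply: ler_wpM2l; last lra.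
    apply: mulr_ge0 => //; apply: mulr_ge0; [apply: mulr_ge0 => //; exact: ltW | exact: exprn_ge0].
  move=> h5.
  have h6 : 0 <= lam * S1 by apply: mulr_ge0 => //; exact: ltW.
  rewrite mulrDl mul1r; lra.
have nYb : nY <= 2 * nX + 2 * nXY.
  have e : \sum_i \sum_k dx * dv * ((f n.+1 i k + (f n.+1 i k - f n i k)) ^+ 2 / (chi1 k * rho)
                  + (g n.+1 i k + (g n.+1 i k - g n i k)) ^+ 2 * rho / chi2 k)
           = 2 * nX + (-1) * nY + 2 * nXY.
    by apply: dsum3 => i k; ring.
  have : 0 <= \sum_i \sum_k dx * dv * ((f n.+1 i k + (f n.+1 i k - f n i k)) ^+ 2 / (chi1 k * rho)
                  + (g n.+1 i k + (g n.+1 i k - g n i k)) ^+ 2 * rho / chi2 k).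
    apply: sumr_ge0 => i _; apply: sumr_ge0 => k _.
    apply: mulr_ge0; first by apply: mulr_ge0; exact: ltW.
    apply: addr_ge0.
      by apply: divr_ge0; [exact: sqr_ge0 | apply: mulr_ge0; exact: ltW].
    by apply: divr_ge0; [apply: mulr_ge0; [exact: sqr_ge0 | exact: ltW] | exact: ltW].
  rewrite e; lra.
have [hJX _] := sq_le (JG_bound oN dx0 pX mX) (mulr_ge0 (mulr_ge0 (mulr_ge0 (mulr_ge0 (ler0n _ 2) Nn0) c0) (ltW dx0)) nX0).
have [_ hJY] := sq_le (JG_bound oN dx0 pY mY) (mulr_ge0 (mulr_ge0 (mulr_ge0 (mulr_ge0 (ler0n _ 2) Nn0) c0) (ltW dx0)) nY0).
have hW3 := W3_bound oN dx0 pX mX pY mY.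
rewrite /Hmod /= -/nX -/nY.
set JX := inner2 dx _ (Dc dx (Phi n.+1)) in hJX *.
set JY := inner2 dx _ (Dc dx (Phi n)) in hJY *.
set W3 := \sum_i dx * (Dc dx (Phi n.+1) i - Dc dx (Phi n) i) ^+ 2 in hW3 *.
set W4 := \sum_i dx * (Dc dx (Phi n) i - Dc dx (Phi n.-1) i) ^+ 2.
have W40 : 0 <= W4 by apply: sumr_ge0 => i _; apply: mulr_ge0; [exact: ltW | exact: sqr_ge0].
have q0 : 0 < delta / (2 * dt) by rewrite divr_gt0 // mulr_gt0.
have g2 := ler_wpM2l (ltW d0) hJX.
have g3 := ler_wpM2l (ltW d0) hJY.
have g4 := ler_wpM2l (ltW q0) hW3.
have g5 : 0 <= delta / (2 * dt) * W4 := mulr_ge0 (ltW q0) W40.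
set A := delta * C7 * dt.
have A0 : 0 <= A by rewrite /A; apply: mulr_ge0; [apply: mulr_ge0 => //; exact: ltW | exact: ltW].
have g6 : delta * (2 * N%:R * c3 * dx * nX) + delta * (2 * N%:R * c3 * dx * nY)
        + delta / (2 * dt) * (8 * N%:R ^+ 2 * c3 * dx ^+ 2 * (nX + nY)) = A * nX + A * nY.
  rewrite /A /C7 /dx; field; rewrite gt_eqF //.
have f2 : A * nY <= 2 * (A * nX) + 2 * (A * nXY).
  have -> : 2 * (A * nX) + 2 * (A * nXY) = A * (2 * nX + 2 * nXY) by ring.
  by apply: ler_wpM2l.
have dden : delta * den <= 1.
  by have := ler_wpM2r (ltW den0) dle; rewrite mulVf // gt_eqF.
have hd : delta * (6 * C7 * M) <= 1 /\ delta * (4 * C7 * dtmax) <= 1.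
  have a1 : 0 <= delta * (4 * C7 * dtmax).
    by apply: mulr_ge0; [exact: ltW | apply: mulr_ge0; [apply: mulr_ge0 | exact: ltW]].
  have a2 : 0 <= delta * (6 * C7 * M).
    by apply: mulr_ge0; [exact: ltW | apply: mulr_ge0; [apply: mulr_ge0 | exact: ltW]].
  have a3 : 0 <= delta by exact: ltW.
  have eden : delta * den = delta * (6 * C7 * M) + delta * (4 * C7 * dtmax) + delta by rewrite /den; ring.
  rewrite eden in dden; split; lra.
have f3 : 3 * (A * nX) <= dt * (2 * M)^-1 * nX.
  have h' : 3 * (delta * C7) <= (2 * M)^-1.
    have [hd1 _] := hd.
    have Mn : M != 0 by rewrite gt_eqF.
    have e : 3 * (delta * C7) = (delta * (6 * C7 * M)) * (2 * M)^-1 by field.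
    rewrite e -[X in _ <= X]mul1r; apply: ler_wpM2r => //.
    by rewrite invr_ge0 mulr_ge0 // ltW.
  have h3 := ler_wpM2r (mulr_ge0 (ltW dt0) nX0) h'.
  have -> : 3 * (A * nX) = 3 * (delta * C7) * (dt * nX) by rewrite /A; ring.
  by have -> : dt * (2 * M)^-1 * nX = (2 * M)^-1 * (dt * nX) by ring.
have f4 : 2 * (A * nXY) <= nXY / 2.
  have h : 4 * A <= 1.
    have t1 : delta * C7 * dt <= delta * C7 * dtmax.
      by apply: ler_wpM2l => //; apply: mulr_ge0 => //; exact: ltW.
    have [_ t2] := hd.
    have e : delta * (4 * C7 * dtmax) = 4 * (delta * C7 * dtmax) by ring.
    rewrite e in t2; rewrite /A; lra.
  have h2 := ler_wpM2r nXY0 h; rewrite mul1r in h2.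
  have e : 4 * A * nXY = 4 * (A * nXY) by ring.
  rewrite e in h2.
  have -> : nXY / 2 = 2^-1 * nXY by rewrite mulrC.
  lra.
have f5 : dt * M^-1 * nX <= dt * (lam * S1) + dt * (dx * SD).
  rewrite -mulrDr -mulrA; apply: ler_wpM2l; first exact: ltW.
  by rewrite mulrC ler_pdivrMr // mulrC.
have e5 : dt * (2 * M)^-1 * nX = 2^-1 * (dt * M^-1 * nX) by rewrite invfM; ring.
rewrite e5 in f3 *.
move: E g2 g3 g4 g5 g6 f2 f3 f4 f5; rewrite /nX /nY.
lra.
Qed.

End Kin.

Unset Implicit Arguments.

Theorem proposition4p8
  (R : realType) (N L : nat) (vstar rho lam dtmax : R)
  (chi1 chi2 : 'I_(2 * L) -> R) (D1lo D1hi Q1 D2lo D2hi Q2 : R) :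
  odd N -> (0 < L)%N -> 0 < vstar -> 0 < rho -> 0 < lam -> 0 < dtmax ->
  (forall k, 0 < chi1 k) -> (forall k, 0 < chi2 k) ->
  (forall k, chi1 k = chi1 (rev_ord k)) -> (forall k, chi2 k = chi2 (rev_ord k)) ->
  \sum_(k < 2 * L) (vstar / L%:R) * chi1 k = 1 ->
  \sum_(k < 2 * L) (vstar / L%:R) * chi2 k = 1 ->
  0 < D1lo -> D1lo <= \sum_(k < 2 * L) (vstar / L%:R) * vel (vstar / L%:R) k ^+ 2 * chi1 k ->
  \sum_(k < 2 * L) (vstar / L%:R) * vel (vstar / L%:R) k ^+ 2 * chi1 k <= D1hi ->
  0 < D2lo -> D2lo <= \sum_(k < 2 * L) (vstar / L%:R) * vel (vstar / L%:R) k ^+ 2 * chi2 k ->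
  \sum_(k < 2 * L) (vstar / L%:R) * vel (vstar / L%:R) k ^+ 2 * chi2 k <= D2hi ->
  \sum_(k < 2 * L) (vstar / L%:R) * vel (vstar / L%:R) k ^+ 4 * chi1 k <= Q1 ->
  \sum_(k < 2 * L) (vstar / L%:R) * vel (vstar / L%:R) k ^+ 4 * chi2 k <= Q2 ->
  exists2 delta2 : R, 0 < delta2 &
    forall dt : R, 0 < dt -> dt <= dtmax ->
    forall delta : R, 0 < delta -> delta <= delta2 ->
    exists2 K : R, 0 < K &
      forall (f g : nat -> 'I_N -> 'I_(2 * L) -> R) (Phi : nat -> 'I_N -> R),
        linearized_scheme dt (2 * lam * dt) (vstar / L%:R) lam rho chi1 chi2 f g ->
        \sum_(i < N) \sum_(k < 2 * L)
            (2 * lam * dt) * (vstar / L%:R) * (f 0%N i k - g 0%N i k) = 0 ->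
        is_potential (2 * lam * dt) (vstar / L%:R) f g Phi ->
        forall n : nat, (1 <= n)%N ->
          Hmod dt (2 * lam * dt) (vstar / L%:R) rho delta chi1 chi2 f g Phi n.+1
          - Hmod dt (2 * lam * dt) (vstar / L%:R) rho delta chi1 chi2 f g Phi n
          <= - (dt * K * normD2 (2 * lam * dt) (vstar / L%:R) rho chi1 chi2
                                 (f n.+1) (g n.+1)).
Proof.
move=> oN L0 vs0 rho0 lam0 dtm0 c10 c20 _ _ s1 s2 D1lo0 hD1lo hD1 D2lo0 hD2lo hD2 _ _.
have dv0 : 0 < vstar / L%:R by rewrite divr_gt0 // ltr0n.
have D10 : 0 <= D1hi by apply: ltW; apply: (lt_le_trans D1lo0); exact: (le_trans hD1lo hD1).
have D20 : 0 <= D2hi by apply: ltW; apply: (lt_le_trans D2lo0); exact: (le_trans hD2lo hD2).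
have [d2 d20 H] := main_step dv0 rho0 c10 c20 s1 s2 D10 D20 hD1 hD2 oN lam0 dtm0.
exists d2 => // dt dt0 dtle delta d0 dle.
have [K K0 HK] := H dt dt0 dtle delta d0 dle.
exists K => // f g Phi Hs _ Hp n _.
exact: HK.
Qed.
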